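(* Let $x\in\mathcal{X}(\mathbb{Z}_S)$ and let $a(x)=a_1(x)+a_2(x)$ be a cocycle $G_T\to U_2$ representing the class of the path torsor $\pi_1^{u,\mathbb{Q}_p}(\bar X;b,x)$. Let $b_x:G_T\to L_1$ be a cochain with $db_x=c\cup a_1(x)$. Then the $Z$-valued 2-cochain $$\phi_x=b_x\cup a_1(x)-2c\cup a_2(x)$$ on $G_T\times G_T$ is a cocycle.
   Context: Setting. $E$ is an elliptic curve over $\mathbb{Q}$ with origin $e$ and $\operatorname{ord}_{s=1}L(E,s)=1$, $X=E\setminus\{e\}$, $\mathcal{E}$ a regular minimal model over $\mathbb{Z}$, $\mathcal{X}$ the complement of the closure of $e$; $p$ an odd prime of good reduction; $S$ a finite set of places containing $\infty$ and the bad primes, $T=S\cup\{p\}$, $G_T$ the Galois group of the maximal extension of $\mathbb{Q}$ unramified outside $T$. $b$ is a nonzero rational tangent vector at $e$ (tangential base point). $U=\pi_1^{u,\mathbb{Q}_p}(\bar X,b)$, $U_2=U^3\backslash U$ (descending central series), $L=\mathrm{Lie}\,U$, $L_2=L/L^3$, $L_1=L/L^2$, $Z=L^2/L^3\cong\mathbb{Q}_p(1)$; the logarithm identifies $U_2$ with $L_2$, and $L_2=L_1\oplus Z$ via the $G$-equivariant splitting $x\mapsto\frac12(x'-I(x'))$, where $I$ is the automorphism induced by $[-1]$ on $E$ and the canonical path from $-b$ to $b$ ($I=-1$ on $L_1$, $I=\mathrm{id}$ on $Z$). Group law: $(l_1+l_2)*(l_1'+l_2')=(l_1+l_1')+(l_2+l_2'+\frac12[l_1,l_1'])$.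 A cocycle $a=a_1+a_2$ into $U_2$ means $a_1$ is an $L_1$-valued cocycle and $da_2=-\frac12 a_1\cup a_1$. Cup products: for $L_1$-valued 1-cochains, $(c\cup c')(g,h)=[c(g),gc'(h)]$; for a $\mathbb{Q}_p$-valued 1-cochain $c$ and a vector-valued cochain $a$, $(c\cup a)(g,h)=c(g)\,ga(h)$. $c=\log\chi:G_T\to\mathbb{Q}_p$, with $\chi$ the $p$-adic cyclotomic character. *)

(* Defs.v *)
From HB Require Import structures.
From mathcomp Require Import all_boot all_algebra.
Set Implicit Arguments. Unset Strict Implicit. Unset Printing Implicit Defensive.
Import GRing.Theory.
Local Open Scope ring_scope.

Definition group_axioms (G : Type) (mul : G -> G -> G) (one : G) (inv : G -> G) :=
  [/\ associative mul, left_id one mul, right_id one mul,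
      (forall g, mul (inv g) g = one) & (forall g, mul g (inv g) = one)].

Definition linear_action (K : fieldType) (V : lmodType K) (G : Type)
  (mul : G -> G -> G) (one : G) (act : G -> V -> V) :=
  [/\ (forall g (a : K) (u v : V), act g (a *: u + v) = a *: act g u + act g v),
      (forall v, act one v = v)
    & (forall g h v, act (mul g h) v = act g (act h v))].

(* The Lie bracket L1 x L1 -> Z = L^2/L^3: K-bilinear and alternating. *)
Definition lie_bracket (K : fieldType) (L1 Z : lmodType K) (br : L1 -> L1 -> Z) :=
  [/\ (forall (a : K) x y z, br (a *: x + y) z = a *: br x z + br y z),
      (forall (a : K) x y z, br z (a *: x + y) = a *: br z x + br z y)
    & (forall x, br x x = 0)].

Definition equivariant_bracket (K : fieldType) (L1 Z : lmodType K) (G : Type)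
  (act1 : G -> L1 -> L1) (actZ : G -> Z -> Z) (br : L1 -> L1 -> Z) :=
  forall g x y, actZ g (br x y) = br (act1 g x) (act1 g y).

(* A homomorphism G -> (K,+) (e.g. c = log chi; G acts trivially on K). *)
Definition additive_character (K : fieldType) (G : Type) (mul : G -> G -> G)
  (c : G -> K) := forall g h, c (mul g h) = c g + c h.

Definition d1 (K : fieldType) (V : lmodType K) (G : Type) (mul : G -> G -> G)
  (act : G -> V -> V) (f : G -> V) : G -> G -> V :=
  fun g h => act g (f h) - f (mul g h) + f g.

Definition d2 (K : fieldType) (V : lmodType K) (G : Type) (mul : G -> G -> G)
  (act : G -> V -> V) (phi : G -> G -> V) : G -> G -> G -> V :=
  fun g h k => act g (phi h k) - phi (mul g h) k + phi g (mul h k) - phi g h.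

Definition cup_br (K : fieldType) (L1 Z : lmodType K) (G : Type)
  (act1 : G -> L1 -> L1) (br : L1 -> L1 -> Z) (a a' : G -> L1) : G -> G -> Z :=
  fun g h => br (a g) (act1 g (a' h)).

Definition cup_sc (K : fieldType) (V : lmodType K) (G : Type)
  (act : G -> V -> V) (c : G -> K) (a : G -> V) : G -> G -> V :=
  fun g h => c g *: act g (a h).

(* Main.v *)
Require Import Defs.
From HB Require Import structures.
From mathcomp Require Import all_boot all_algebra.
Import GRing.Theory.
Local Open Scope ring_scope.

Lemma e1 (V : zmodType) (x y z : V) : x = y + z - (y - x + z).
Proof. by rewrite opprD opprB addrACA subrr addr0 addrC subrK. Qed.
Lemma e2 (V : zmodType) (x y z : V) : y - x + z = 0 -> x = y + z.
Proof. by move=> H; rewrite {1}(@e1 _ x y z) H subr0. Qed.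
Lemma e3 (V : zmodType) (x y z w : V) : y - x + z = - w -> x = y + z + w.
Proof. by move=> H; rewrite {1}(@e1 _ x y z) H opprK. Qed.

Lemma fin (K : fieldType) (Z : lmodType K) (two : (2:K) != 0) (X1 X2 X3 X4 Q R : Z) (cg ch : K) :
X1 - 2*:(ch*:Q) - (X1 + X2 + -(cg*:X3) - 2*:((cg+ch)*:Q)) + (X2 + X4 - 2*:(cg*:(Q + R + 2^-1*:X3))) - (X4 - 2*:(cg*:R)) = 0.
Proof.
have h3 : 2*:(cg*:(2^-1*:X3)) = cg*:X3 by rewrite !scalerA mulrAC divff // mul1r.
rewrite (scalerDl Q cg ch) !scalerDr h3.
move: (2 *: (ch *: Q)) (2 *: (cg *: Q)) (2 *: (cg *: R)) (cg *: X3) => A B C D.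
rewrite !opprD !opprK.
rewrite !addrA (addrAC X1) subrr add0r.
rewrite [- A - X2 + D + B + A]addrC !addrA subrr add0r.
rewrite [- X2 + D + B + X2]addrC !addrA subrr add0r.
rewrite (addrAC (D + B)) addrK.
rewrite [D + X4 - C - D]addrC !addrA addNr add0r.
rewrite [X4 - C - X4]addrC !addrA addNr add0r.
by rewrite addNr.
Qed.

Set Implicit Arguments.
Section H.
Variables (K : fieldType) (V : lmodType K) (f : V -> V).
Hypothesis hf : forall (a : K) (u v : V), f (a *: u + v) = a *: f u + f v.
Lemma f0 : f 0 = 0.
Proof. have := hf 1 0 0; rewrite scaler0 add0r scale1r => H. by apply/(addrI (f 0)); rewrite addr0 -H. Qed.
Lemma fD u v : f (u + v) = f u + f v.
Proof. by have := hf 1 u v; rewrite !scale1r. Qed.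
Lemma fZ a u : f (a *: u) = a *: f u.
Proof. by rewrite -[a *: u]addr0 hf f0 addr0. Qed.
Lemma fN u : f (- u) = - f u.
Proof. by rewrite -scaleN1r fZ scaleN1r. Qed.
Lemma fB u v : f (u - v) = f u - f v.
Proof. by rewrite fD fN. Qed.
End H.
Arguments fB {K V f} hf u v.
Arguments fD {K V f} hf u v.
Arguments fZ {K V f} hf a u.
Arguments fN {K V f} hf u.


Section B.
Variables (K : fieldType) (L1 Z : lmodType K) (br : L1 -> L1 -> Z).
Hypothesis hbr : lie_bracket br.
Lemma brDl x y z : br (x + y) z = br x z + br y z.
Proof. by case: hbr => h _ _; have := h 1 x y z; rewrite !scale1r. Qed.
Lemma brDr x y z : br z (x + y) = br z x + br z y.
Proof. by case: hbr => _ h _; have := h 1 x y z; rewrite !scale1r. Qed.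
Lemma brZl a x z : br (a *: x) z = a *: br x z.
Proof. case: hbr => h _ _. have h0 : br 0 z = 0.
  have := h 1 0 0 z; rewrite scaler0 add0r scale1r => H. by apply/(addrI (br 0 z)); rewrite addr0 -H.
 by rewrite -[a *: x]addr0 h h0 addr0. Qed.
Lemma brNl x z : br (- x) z = - br x z.
Proof. by rewrite -scaleN1r brZl scaleN1r. Qed.
Lemma brNl' x z : br (- x) z = - br x z.
Proof. exact: brNl. Qed.
Lemma brBl x y z : br (x - y) z = br x z - br y z.
Proof. by rewrite brDl brNl. Qed.
End B.
Arguments brDl {K L1 Z br} hbr x y z.
Arguments brDr {K L1 Z br} hbr x y z.
Arguments brZl {K L1 Z br} hbr a x z.
Arguments brNl {K L1 Z br} hbr x z.
Arguments brBl {K L1 Z br} hbr x y z.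


Theorem lemma2p1
  (K : fieldType) (two_neq0 : (2 : K) != 0)
  (L1 Z : lmodType K)
  (G : Type) (mul : G -> G -> G) (one : G) (inv : G -> G)
  (hG : group_axioms mul one inv)
  (act1 : G -> L1 -> L1) (actZ : G -> Z -> Z)
  (hact1 : linear_action mul one act1) (hactZ : linear_action mul one actZ)
  (br : L1 -> L1 -> Z) (hbr : lie_bracket br)
  (heq : equivariant_bracket act1 actZ br)
  (c : G -> K) (hc : additive_character mul c)
  (a1 : G -> L1) (a2 : G -> Z)
  (ha1 : forall g h, d1 mul act1 a1 g h = 0)
  (ha2 : forall g h, d1 mul actZ a2 g h = - (2 : K)^-1 *: cup_br act1 br a1 a1 g h)
  (b : G -> L1)
  (hb : forall g h, d1 mul act1 b g h = cup_sc act1 c a1 g h) :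
  forall g h k,
    d2 mul actZ
       (fun g h => cup_br act1 br b a1 g h - (2 : K) *: cup_sc actZ c a2 g h)
       g h k = 0.
Proof.
move=> g h k.
case: hact1 => l1 _ m1; case: hactZ => lZ _ mZ.
have eb : b (mul g h) = act1 g (b h) + b g - c g *: act1 g (a1 h).
  have := hb g h; rewrite /d1 /cup_sc => H; apply: e3; by rewrite H opprK.
have ea1 : a1 (mul h k) = act1 h (a1 k) + a1 h.
  have := ha1 h k; rewrite /d1 => H; exact: e2.
have ea2 : a2 (mul h k) = actZ h (a2 k) + a2 h + 2^-1 *: br (a1 h) (act1 h (a1 k)).
  have := ha2 h k; rewrite /d1 /cup_br scaleNr => H; exact: e3.
rewrite /d2 /cup_br /cup_sc eb ea1 ea2 hc m1 mZ.
rewrite ?(fB (l1 _)) ?(fD (l1 _)) ?(fB (lZ _)) ?(fD (lZ _)) ?(fZ (lZ _)) ?heq.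
rewrite ?(brDl hbr) ?(brBl hbr) ?(brDr hbr) ?(brZl hbr) ?(fZ (l1 _)) ?(brZl hbr).
rewrite (brNl hbr) (brZl hbr).
exact: fin.
Qed.
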